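(* Let $\alpha\ge0$, $\beta\ge0$, $\gamma>0$, $T>0$ satisfy $\gamma/2+\beta+T\alpha>1/T$. Then for every $\theta\in(0,2\pi)$ both roots $\lambda\in\mathbb C$ of $$\lambda^2+\gamma\Big(\frac{1-e^{i\theta}}{T}+\lambda\Big)+\beta\lambda(1-e^{i\theta})+\alpha(2-e^{i\theta}-e^{-i\theta})=0$$ have strictly negative real part, while for $\theta=0$ the roots are $0$ and $-\gamma$. Equivalently, with $c=\cos\theta$, $s=\sin\theta$, for all $c\in[-1,1)$ with $s^2=1-c^2$, $$(\beta(1-c)+\gamma)\Big[(\beta(1-c)+\gamma)(1-c)\Big(\frac{\gamma}{T}+2\alpha\Big)+\frac{\beta\gamma}{T}s^2\Big]-\Big(\frac{\gamma}{T}\Big)^2s^2>0.$$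
   Context: This is the characteristic equation of the deterministic linear car-following system $\ddot s_n=\gamma\big(\frac{s_{n+1}-s_n}{T}-\dot s_n\big)+\beta(\dot s_{n+1}-\dot s_n)+\alpha(s_{n+1}-2s_n+s_{n-1})$ on a ring, obtained from the ansatz $s_n=\xi e^{\lambda t}e^{in\theta}$, $\theta=2\pi k/N$. *)

(* Defs.v *)
From Stdlib Require Import Reals.
From Coquelicot Require Import Coquelicot.
Open Scope R_scope.

Definition cexpi (theta : R) : Complex.C := (cos theta, sin theta).

Definition char_poly (alpha beta gamma T theta : R) (lam : Complex.C) : Complex.C :=
  (lam * lam
   + RtoC gamma * ((1 - cexpi theta) / RtoC T + lam)
   + RtoC beta * lam * (1 - cexpi theta)
   + RtoC alpha * (2 - cexpi theta - cexpi (- theta)))%C.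

(* Main.v *)
Require Import Defs.
From Stdlib Require Import Reals Lra Psatz.
From Coquelicot Require Import Coquelicot.
Open Scope R_scope.
Lemma cp_eq a b g T th x y : T <> 0 ->
  char_poly a b g T th (x,y) =
  (x*x - y*y + g*((1-cos th)/T + x) + b*(x*(1-cos th) + y*sin th) + a*(2 - 2*cos th),
   2*x*y + g*(- sin th / T + y) + b*(y*(1-cos th) - x*sin th))%R.
Proof. intros HT. unfold char_poly, cexpi. rewrite cos_neg, sin_neg.
 apply injective_projections; simpl; field; auto.
Qed.

Lemma P3 a b g T c s : 0 <= a -> 0 <= b -> 0 < g -> 0 < T ->
  g / 2 + b + T * a > 1 / T -> -1 <= c < 1 -> s ^ 2 = 1 - c ^ 2 ->
     (b * (1 - c) + g) *
       ((b * (1 - c) + g) * (1 - c) * (g / T + 2 * a)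
        + b * g / T * s ^ 2)
     - (g / T) ^ 2 * s ^ 2 > 0.
Proof.
  intros Ha Hb Hg HT H Hc Hs.
  set (k := g / T). assert (Hk : k * T = g) by (unfold k; field; lra).
  assert (Hk0 : 0 < k) by (unfold k; apply Rdiv_lt_0_compat; lra).
  assert (H1 : g*g/2 + b*g + T*a*g > k).
  { assert (g * (g / 2 + b + T * a) > g * (1/T)) by (apply Rmult_lt_compat_l; lra).
    unfold k. unfold Rdiv in *. nra. }
  clearbody k. rewrite Hs. set (u := 1 - c).
  assert (Hu : 0 < u <= 2) by (unfold u; lra).
  replace (1 - c^2) with (u*(2-u)) by (unfold u; ring).
  clearbody u.
  set (F0 := (g*g/2 + b*g + T*a*g - k)).
  assert (HF0 : 0 < F0) by (unfold F0; lra).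
  replace ((b * u + g) * ((b * u + g) * u * (k + 2 * a) + b * g / T * (u * (2 - u))) -
            k ^ 2 * (u * (2 - u)))
   with (u * (2*k*F0 + u*(2*g*b*(k+2*a) - k*b*g + 2*k*b*b + k*k) + u*u*(b*b*(k+2*a) - k*b*b)))
   by (unfold F0; replace (b*g/T) with (b*k) by (rewrite <- Hk; field; lra); rewrite <- Hk; field).
  apply Rmult_lt_0_compat; [lra|].
  assert (0 <= u*(2*g*b*(k+2*a) - k*b*g + 2*k*b*b + k*k)).
  { apply Rmult_le_pos; [lra|].
    assert (0 <= g*b) by nra. assert (0 <= g*b*k) by nra. assert (0<= g*b*a) by nra. assert (0 <= k*b*b) by nra. nra. }
  assert (0 <= u*u*(b*b*(k+2*a) - k*b*b)).
  { apply Rmult_le_pos; [nra|]. assert (0 <= b*b*a) by nra. nra. }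
  nra.
Qed.

Lemma core a b g k u s x y : 0 <= a -> 0 <= b -> 0 < g -> 0 < k -> 0 < u ->
  (g + b*u) * ((g + b*u) * u * (k + 2*a) + b*k*s^2) - k^2 * s^2 > 0 ->
  y * (2*x + (g+b*u)) = s*(b*x+k) ->
  x*x + (g+b*u)*x + u*(k+2*a) = y*y - b*s*y ->
  x < 0.
Proof.
  intros Ha Hb Hg Hk Hu HP HI HR.
  destruct (Rlt_or_le x 0) as [|Hx]; [assumption|exfalso].
  set (B := g + b*u) in *. assert (HB : 0 < B) by (unfold B; nra). clearbody B.
  assert (HP' : u*(k+2*a)*(B*B) > s^2*(k*(k-b*B))) by nra.
  set (q := u*(k+2*a)) in *. assert (Hq: 0 < q) by (unfold q; nra). clearbody q.
  assert (E : (x*x + B*x + q)*((2*x+B)*(2*x+B)) = s^2*(b*x+k)*(k-b*x-b*B)).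
  { rewrite HR. transitivity ((y*(2*x+B))*(y*(2*x+B)) - b*s*(2*x+B)*(y*(2*x+B))); [ring|].
    rewrite HI. ring. }
  assert (L : (x*x + B*x + q)*((2*x+B)*(2*x+B)) >= q*(B*B)).
  { assert (0 <= x*x + B*x) by nra. assert (B*B <= (2*x+B)*(2*x+B)) by nra. nra. }
  assert (Rr : s^2*(b*x+k)*(k-b*x-b*B) <= s^2*(k*(k-b*B))).
  { assert (0 <= s^2) by nra. rewrite Rmult_assoc. apply Rmult_le_compat_l; [lra|].
    assert (0 <= b*x) by (apply Rmult_le_pos; lra). assert (0 <= b*x*(b*x)) by (apply Rmult_le_pos; lra). assert (0<= b*x*(b*B)) by (apply Rmult_le_pos; [lra| apply Rmult_le_pos; lra]).
    replace ((b*x+k)*(k-b*x-b*B)) with (k*(k-b*B) - (b*x*(b*x) + b*x*(b*B))) by ring. lra. }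
  nra.
Qed.
Theorem mainTheorem6 (alpha beta gamma T : R) :
  0 <= alpha -> 0 <= beta -> 0 < gamma -> 0 < T ->
  gamma / 2 + beta + T * alpha > 1 / T ->
  (forall theta : R, 0 < theta < 2 * PI ->
     forall lam : Complex.C, char_poly alpha beta gamma T theta lam = 0%C ->
       Re lam < 0)
  /\
  (forall lam : Complex.C,
     char_poly alpha beta gamma T 0 lam = 0%C <-> (lam = 0%C \/ lam = RtoC (- gamma)))
  /\
  (forall c s : R, -1 <= c < 1 -> s ^ 2 = 1 - c ^ 2 ->
     (beta * (1 - c) + gamma) *
       ((beta * (1 - c) + gamma) * (1 - c) * (gamma / T + 2 * alpha)
        + beta * gamma / T * s ^ 2)
     - (gamma / T) ^ 2 * s ^ 2 > 0).
Proof.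
  intros Ha Hb Hg HT H.
  assert (HT0 : T <> 0) by lra.
  split; [|split].
  - intros th Hth [x y] Hc. rewrite cp_eq in Hc by exact HT0.
    assert (E1 := f_equal fst Hc). assert (E2 := f_equal snd Hc). simpl in E1, E2.
    simpl.
    set (c := cos th) in *. set (s := sin th) in *.
    assert (Hcs : s^2 = 1 - c^2).
    { unfold s, c. pose proof (sin2_cos2 th) as S. unfold Rsqr in S. simpl. lra. }
    assert (Hc1 : -1 <= c < 1).
    { pose proof (COS_bound th). split; [unfold c; lra|].
      destruct (Rtotal_order th PI) as [Hlt|[Heq|Hgt]].
      - assert (0 < s) by (apply sin_gt_0; lra). nra.
      - unfold c. rewrite Heq, cos_PI. lra.
      - assert (s < 0) by (apply sin_lt_0; lra). nra. }
    set (k := gamma / T).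
    assert (Hk : 0 < k) by (unfold k; apply Rdiv_lt_0_compat; lra).
    assert (HP := P3 alpha beta gamma T c s Ha Hb Hg HT H Hc1 Hcs).
    apply (core alpha beta gamma k (1-c) s x y Ha Hb Hg Hk ltac:(lra)).
    + replace (gamma + beta*(1-c)) with (beta*(1-c)+gamma) by ring.
      replace (beta*k) with (beta*gamma/T) by (unfold k; field; auto). exact HP.
    + assert (y * (2 * x + (gamma + beta * (1 - c))) - s * (beta * x + k) =
          2 * x * y + gamma * (- s / T + y) + beta * (y * (1 - c) - x * s))
        by (unfold k; field; auto). lra.
    + assert (x * x + (gamma + beta * (1 - c)) * x + (1 - c) * (k + 2 * alpha) - (y * y - beta * s * y) =
          x * x - y * y + gamma * ((1 - c) / T + x) + beta * (x * (1 - c) + y * s) + alpha * (2 - 2 * c))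
        by (unfold k; field; auto). lra.
  - intros [x y]. rewrite cp_eq by exact HT0. rewrite cos_0, sin_0. split.
    + intros Hc. assert (E1 := f_equal fst Hc). assert (E2 := f_equal snd Hc). simpl in E1, E2.
      assert (Ey : y = 0).
      { destruct (Req_dec y 0) as [|Hy]; [assumption|exfalso].
        assert (Hx : 2*x + gamma = 0).
        { apply (Rmult_eq_reg_l y); [|exact Hy]. lra. }
        nra. }
      subst y.
      assert (Hx : x * (x + gamma) = 0) by lra.
      destruct (Rmult_integral _ _ Hx) as [Hx0|Hx0].
      * left. subst x. reflexivity.
      * right. replace x with (-gamma) by lra. reflexivity.
    + intros [Hl|Hl]; injection Hl; intros -> ->; apply injective_projections; simpl; field; auto.
  - intros c s Hc Hs. exact (P3 alpha beta gamma T c s Ha Hb Hg HT H Hc Hs).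
Qed.
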